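(* For every prime $p$, every $q=p^e$ ($e\ge1$) and every $m\ge2$, we have $\mathrm{Code}_p(\mathrm{AG}_1(m,q))=\mathrm{Code}_p(\mathcal{T}_A(m,q))$ (as subspaces of $\mathbb{F}_p^{X}$, $X=\mathbb{A}^m(\mathbb{F}_q)$).
   Context: $\mathrm{AG}_1(m,q)$ is the block design whose points are the points of $\mathbb{A}^m(\mathbb{F}_q)$ and whose blocks are all affine lines of $\mathbb{A}^m(\mathbb{F}_q)$. $\mathcal{T}_A(m,q)$ is the design with the same point set, obtained by fixing $q$ pairwise parallel hyperplanes $H_1,\dots,H_q$ partitioning $\mathbb{A}^m(\mathbb{F}_q)$ (the groups) and taking as blocks all affine lines not contained in any $H_j$. For a block design $(X,\mathcal{B})$ and prime power $r$, $\mathrm{Code}_r$ of the design is the $\mathbb{F}_r$-linear code $\{c\in\mathbb{F}_r^X:\ \sum_{x\in B}c_x=0\ \forall B\in\mathcal{B}\}$. *)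

(* Defs.v *)
From HB Require Import structures.
From mathcomp Require Import all_boot all_order all_algebra all_fingroup all_field.
Set Implicit Arguments. Unset Strict Implicit. Unset Printing Implicit Defensive.
Import GRing.Theory.
Local Open Scope ring_scope.

Definition affine_line (F : finFieldType) (m : nat) (a b : 'rV[F]_m)
  : {set 'rV[F]_m} := [set a + t *: b | t : F].

Definition is_affine_line (F : finFieldType) (m : nat) (L : {set 'rV[F]_m}) : bool :=
  [exists a : 'rV[F]_m, exists b : 'rV[F]_m, (b != 0) && (L == affine_line a b)].

Definition AG1_blocks (F : finFieldType) (m : nat) : {set {set 'rV[F]_m}} :=
  [set L | is_affine_line L].

(* These q hyperplanes are pairwise parallel and partition A^m(F); every
   parallel class of hyperplanes arises this way for some c <> 0. *)
Definition hyperplane (F : finFieldType) (m : nat) (c : 'rV[F]_m) (j : F)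
  : {set 'rV[F]_m} := [set x : 'rV[F]_m | \sum_(i < m) c 0 i * x 0 i == j].

(* Blocks of T_A(m,q) w.r.t. the groups {hyperplane c j | j in F}:
   affine lines not contained in any of the groups. *)
Definition TA_blocks (F : finFieldType) (m : nat) (c : 'rV[F]_m)
  : {set {set 'rV[F]_m}} :=
  [set L | is_affine_line L && ~~ [exists j : F, L \subset hyperplane c j]].

Definition code (p : nat) (X : finType) (B : {set {set X}})
  : {set {ffun X -> 'F_p}} :=
  [set w : {ffun X -> 'F_p} | [forall b in B, \sum_(x in b) w x == 0]].

(* Main.v *)
Require Import Defs.
From HB Require Import structures.
From mathcomp Require Import all_boot all_order all_algebra all_fingroup all_field.
Local Open Scope ring_scope.
Import GRing.Theory.
Set Implicit Arguments. Unset Strict Implicit.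

Lemma pdivF (p : nat) (F : finFieldType) (charF : p \in [pchar F]) : (p %| #|F|)%N.
Proof.
rewrite (card_pprimeChar charF).
case: (logn p #|F|) (card_pprimeChar charF) => [|n] /=.
  by rewrite expn0 => H; have := finNzRing_gt1 F; rewrite H.
by rewrite expnS dvdn_mulr.
Qed.

Definition dot (F : finFieldType) m (c x : 'rV[F]_m) := \sum_(i < m) c 0 i * x 0 i.

Lemma dotDZ (F : finFieldType) m (c x y : 'rV[F]_m) t :
  dot c (x + t *: y) = dot c x + t * dot c y.
Proof.
rewrite /dot mulr_sumr -big_split; apply: eq_bigr => i _; rewrite !mxE.
by rewrite mulrDr mulrCA.
Qed.

Lemma line_sum (F : finFieldType) m (a u : 'rV[F]_m) (R : nmodType) (w : 'rV[F]_m -> R) :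
  u != 0 -> \sum_(x in affine_line a u) w x = \sum_(t : F) w (a + t *: u).
Proof.
move=> unz; rewrite /affine_line big_imset /=; last first.
  move=> s t _ _ /addrI /eqP; rewrite -subr_eq0 -scalerBl scaler_eq0 (negPf unz) orbF.
  by rewrite subr_eq0 => /eqP.
by apply: eq_bigl => t; rewrite inE.
Qed.

Lemma line_in_hyp (F : finFieldType) m (c a u : 'rV[F]_m) j :
  affine_line a u \subset hyperplane c j -> dot c u = 0.
Proof.
move=> /subsetP H.
have /eqP e0 : dot c (a + 0 *: u) == j.
  by have := H (a + 0 *: u); rewrite inE; apply; apply/imsetP; exists 0.
have /eqP e1 : dot c (a + 1 *: u) == j.
  by have := H (a + 1 *: u); rewrite inE; apply; apply/imsetP; exists 1.
move: e1; rewrite dotDZ -e0 scale0r addr0 mul1r => /eqP.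
by rewrite -subr_eq0 addrC addKr => /eqP.
Qed.

Lemma key (F : finFieldType) m (R : zmodType) (w : 'rV[F]_m -> R) (c x b d : 'rV[F]_m) :
  (forall y : R, y *+ #|F| = 0) -> dot c b = 0 -> dot c d != 0 ->
  (forall a u, dot c u != 0 -> \sum_(t : F) w (a + t *: u) = 0) ->
  \sum_(t : F) w (x + t *: b) = 0.
Proof.
move=> hq hb hd H.
have E1: \sum_(s : F) \sum_(t : F) w (x + t *: (d + s *: b)) = 0.
  by apply: big1 => s _; apply: H; rewrite dotDZ hb mulr0 addr0.
have E2: \sum_(u : F) \sum_(t : F) w ((x + u *: b) + t *: d) = 0.
  by apply: big1 => u _; apply: H.
rewrite exchange_big /= (bigD1 0) //= in E1.
rewrite exchange_big /= (bigD1 0) //= in E2.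
have S0 : \sum_(s : F) w (x + 0 *: (d + s *: b)) = 0.
  by rewrite (eq_bigr (fun _ => w x)) ?sumr_const ?card_ord ?hq // => s _; rewrite scale0r addr0.
have S1 : \sum_(t : F | t != 0) \sum_(s : F) w (x + t *: (d + s *: b)) =
          \sum_(t : F | t != 0) \sum_(u : F) w (x + u *: b + t *: d).
  apply: eq_bigr => t tnz; symmetry; rewrite (reindex_inj (mulfI tnz)) /=.
  by apply: eq_bigr => s _; rewrite scalerDr scalerA addrA addrAC.
rewrite S0 add0r S1 in E1.
rewrite E1 addr0 in E2.
by rewrite -[RHS]E2; apply: eq_bigr => u _; rewrite scale0r addr0.
Qed.

Theorem mainTheorem5 (p : nat) (F : finFieldType) (m : nat)
  (p_prime : prime p) (charF : p \in [pchar F]) (m_ge2 : (2 <= m)%N)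
  (c : 'rV[F]_m) (c_nz : c != 0) :
  code p (AG1_blocks F m) = code p (TA_blocks c).
Proof.
apply/setP => w; rewrite !inE; apply/forall_inP/forall_inP => H L.
  by rewrite inE => /andP[hL _]; apply: H; rewrite inE.
rewrite inE => /existsP[a /existsP[u /andP[unz /eqP ->]]].
have Hw : forall a u, dot c u != 0 -> \sum_(t : F) w (a + t *: u) = 0.
  move=> a' u' hu.
  have u'nz : u' != 0.
    by apply: contraNneq hu => ->; rewrite /dot big1 // => i _; rewrite mxE mulr0.
  rewrite -line_sum //; apply/eqP/H; rewrite inE; apply/andP; split.
    by apply/existsP; exists a'; apply/existsP; exists u'; rewrite u'nz eqxx.
  by apply/existsP => -[j /line_in_hyp]; apply/eqP.
have [i ci] : exists i, c 0 i != 0.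
  apply/existsP; apply: contraNT c_nz => /existsPn hc.
  by apply/eqP/rowP => i; rewrite mxE; apply/eqP/negPn/hc.
have hd : dot c (delta_mx 0 i) != 0.
  rewrite /dot (bigD1 i) //= big1 ?addr0 ?mxE ?eqxx ?mulr1 //.
  by move=> k ki; rewrite mxE (negPf ki) andbF mulr0.
have hq : forall y : 'F_p, y *+ #|F| = 0.
  move=> y; rewrite -mulr_natr.
  by move: (pdivF charF); rewrite (dvdn_pcharf (pchar_Fp p_prime)) => /eqP ->; rewrite mulr0.
rewrite line_sum //; apply/eqP.
have [hb|hb] := eqVneq (dot c u) 0; last exact: Hw.
exact: key hq hb hd Hw.
Qed.
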